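(* Let $m,n$ be positive integers, $r\le\min\{m,n\}$ a nonnegative integer and $a\in\{0,1,\dots,r\}$. If $Q(\lambda)$ is an $m\times n$ complex matrix pencil with $Q\in{\cal C}_a^r$ and normal rank of $Q$ equal to $r$, then (i) $\varepsilon(Q)\leq a$ and (ii) $\eta(Q)\leq r-a$.
   Context: A matrix pencil is $A+\lambda B$ with complex matrices $A,B$. The normal rank is the rank over $\mathbb{C}(\lambda)$. The degree of a vector polynomial is the maximum degree of its entries. ${\cal C}_a^r$ is the set of all $m\times n$ pencils $u_1(\lambda)v_1(\lambda)^T+\cdots+u_r(\lambda)v_r(\lambda)^T$ with $u_i\in\mathbb{C}[\lambda]^m$, $v_i\in\mathbb{C}[\lambda]^n$ of degree at most $1$, $\deg u_1=\cdots=\deg u_a=0$ and $\deg v_{a+1}=\cdots=\deg v_r=0$. In the Kronecker canonical form of $Q$, the right singular blocks $L_{\varepsilon_1},\dots,L_{\varepsilon_p}$ and left singular blocks $L_{\eta_1}^T,\dots,L_{\eta_q}^T$ (where $L_k$ is the $k\times(k+1)$ pencil with $\lambda$ at $(i,i)$ and $1$ at $(i,i+1)$) have orders called the right (column) and left (row) minimal indices of $Q$; $\varepsilon(Q)=\sum_i\varepsilon_i$ and $\eta(Q)=\sum_j\eta_j$ denote their sums. *)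

(* Defs.v *)
From HB Require Import structures.
From mathcomp Require Import all_boot all_order all_algebra.
From mathcomp Require Import fraction complex reals.
Set Implicit Arguments.
Unset Strict Implicit.
Unset Printing Implicit Defensive.
Import Order.TTheory GRing.Theory Num.Theory.
Local Open Scope ring_scope.

Section Pencils.
Variable C : fieldType.

Definition pencil_mx (p q : nat) (A B : 'M[C]_(p, q)) : 'M[{poly C}]_(p, q) :=
  map_mx polyC A + 'X *: map_mx polyC B.

Definition normal_rank (p q : nat) (Q : 'M[{poly C}]_(p, q)) : nat :=
  \rank (map_mx (@FracField.tofrac {poly C}) Q : 'M[{fraction {poly C}}]_(p, q)).

(* "degree at most d" for a vector polynomial (max of entry degrees;
   the zero vector counts as having degree <= d). *)
Definition vdeg_le (p : nat) (d : nat) (u : 'cV[{poly C}]_p) : bool :=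
  [forall i, (size (u i ord0) <= d.+1)%N].

Definition in_Car (m n : nat) (a r : nat) (Q : 'M[{poly C}]_(m, n)) : Prop :=
  exists (u : 'I_r -> 'cV[{poly C}]_m) (v : 'I_r -> 'cV[{poly C}]_n),
    [/\ forall i, vdeg_le 1 (u i) /\ vdeg_le 1 (v i),
        forall i : 'I_r, (i < a)%N -> vdeg_le 0 (u i),
        forall i : 'I_r, (a <= i)%N -> vdeg_le 0 (v i)
      & Q = \sum_(i < r) (u i *m (v i)^T)].

Record pencil := Pencil { prow : nat; pcol : nat;
  pA : 'M[C]_(prow, pcol); pB : 'M[C]_(prow, pcol) }.

Definition pdsum (P1 P2 : pencil) : pencil :=
  @Pencil (prow P1 + prow P2) (pcol P1 + pcol P2)
    (block_mx (pA P1) 0 0 (pA P2)) (block_mx (pB P1) 0 0 (pB P2)).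

Definition pempty : pencil := @Pencil 0 0 0 0.

(* KL k  : L_k (k x (k+1)), lambda at (i,i), 1 at (i,i+1)
   KLT k : L_k^T
   KJ k mu : J_k(mu) + lambda I_k   (finite eigenvalue mu)
   KN k  : I_k + lambda N_k         (infinite eigenvalue) *)
Inductive kblock := KL of nat | KLT of nat | KJ of nat & C | KN of nat.

Definition Lpencil (k : nat) : pencil :=
  @Pencil k k.+1 (\matrix_(i < k, j < k.+1) ((j : nat) == i.+1)%:R)
                 (\matrix_(i < k, j < k.+1) ((j : nat) == i)%:R).

Definition shift_mx (k : nat) : 'M[C]_k :=
  \matrix_(i < k, j < k) ((j : nat) == i.+1)%:R.

Definition block_pencil (b : kblock) : pencil :=
  match b with
  | KL k => Lpencil k
  | KLT k => @Pencil k.+1 k (pA (Lpencil k))^T (pB (Lpencil k))^T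
  | KJ k mu => @Pencil k k (mu%:M + shift_mx k) 1%:M
  | KN k => @Pencil k k 1%:M (shift_mx k)
  end.

Definition kcf_pencil (bs : seq kblock) : pencil :=
  foldr (fun b P => pdsum (block_pencil b) P) pempty bs.

Definition block_ok (b : kblock) : bool :=
  match b with KJ k _ | KN k => (0 < k)%N | _ => true end.

Definition strict_equiv (m n : nat) (A B : 'M[C]_(m, n)) (P : pencil) : Prop :=
  exists (U : 'M[C]_(m, prow P)) (U' : 'M[C]_(prow P, m))
         (V : 'M[C]_(pcol P, n)) (V' : 'M[C]_(n, pcol P)),
    [/\ U *m U' = 1%:M, U' *m U = 1%:M, V *m V' = 1%:M, V' *m V = 1%:M
       & A = U *m pA P *m V /\ B = U *m pB P *m V].

Definition is_KCF (m n : nat) (A B : 'M[C]_(m, n)) (bs : seq kblock) : Prop :=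
  all block_ok bs /\ strict_equiv A B (kcf_pencil bs).

(* sums of right (column) and left (row) minimal indices read off a KCF *)
Definition eps_sum (bs : seq kblock) : nat :=
  \sum_(b <- bs) (if b is KL k then k else 0%N).
Definition eta_sum (bs : seq kblock) : nat :=
  \sum_(b <- bs) (if b is KLT k then k else 0%N).

End Pencils.

(* Main.v *)
Require Import Defs.
From HB Require Import structures.
From mathcomp Require Import all_boot all_order all_algebra.
From mathcomp Require Import fraction complex reals zify.
Set Implicit Arguments.
Unset Strict Implicit.
Unset Printing Implicit Defensive.
Import GRing.Theory Num.Theory.
Local Open Scope ring_scope.

Section Aux.
Variable C : fieldType.

Definition pv q d (X : 'M[C]_(q, d.+1)) : 'cV[{poly C}]_q :=
  \col_i \poly_(j < d.+1) X i (inord j).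
Definition cm p D (y : 'cV[{poly C}]_p) : 'M[C]_(p, D) :=
  \matrix_(i < p, j < D) (y i ord0)`_j.
Definition Fd p q d D (P : 'M[{poly C}]_(p, q)) (X : 'M[C]_(q, d.+1)) : 'M[C]_(p, D) :=
  cm D (P *m pv X).
Arguments Fd {p q} d D P X.

Lemma pvZ q d a (X : 'M[C]_(q, d.+1)) : pv (a *: X) = a%:P *: pv X.
Proof.
apply/matrixP => i j; rewrite !mxE; apply/polyP => k.
by rewrite coefCM !coef_poly !mxE; case: ifP; rewrite ?mulr0.
Qed.
Lemma pvD q d (X Y : 'M[C]_(q, d.+1)) : pv (X + Y) = pv X + pv Y.
Proof.
apply/matrixP => i j; rewrite !mxE; apply/polyP => k.
by rewrite coefD !coef_poly !mxE; case: ifP; rewrite ?addr0.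
Qed.
Lemma cmZ p D a (y : 'cV[{poly C}]_p) : cm D (a%:P *: y) = a *: cm D y.
Proof. by apply/matrixP => i j; rewrite !mxE coefCM. Qed.
Lemma cmD p D (y z : 'cV[{poly C}]_p) : cm D (y + z) = cm D y + cm D z.
Proof. by apply/matrixP => i j; rewrite !mxE coefD. Qed.

Fact Fd_is_semilinear p q d D (P : 'M[{poly C}]_(p, q)) : semilinear (@Fd p q d D P).
Proof.
split => [a X | X Y]; rewrite /Fd.
  by rewrite pvZ -scalemxAr cmZ.
by rewrite pvD mulmxDr cmD.
Qed.
HB.instance Definition _ p q d D (P : 'M[{poly C}]_(p, q)) :=
  GRing.isSemilinear.Build C 'M[C]_(q, d.+1) 'M[C]_(p, D) _ (@Fd p q d D P)
    (Fd_is_semilinear d D P).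

Definition rk p q d (P : 'M[{poly C}]_(p, q)) :=
  \dim (limg (linfun (@Fd p q d d.+2 P))).

Lemma dim_limg_le (aT rT : vectType C) (f : 'Hom(aT, rT)) U :
  (\dim (f @: U) <= \dim U)%N.
Proof. by rewrite -(limg_ker_dim f U) leq_addl. Qed.

Lemma dim_limg_tgt (aT rT : vectType C) (f : 'Hom(aT, rT)) :
  (\dim (limg f) <= dim rT)%N.
Proof. by rewrite -dimvf dimvS // subvf. Qed.

Lemma limg_subP (aT rT : vectType C) (f : 'Hom(aT, rT)) (W : {vspace rT}) :
  (forall x, f x \in W) -> (limg f <= W)%VS.
Proof. by move=> H; apply/subvP => y /memv_imgP [x _ ->]. Qed.

Lemma dim_mat p D : dim 'M[C]_(p, D) = (p * D)%N.
Proof. exact: dim_matrix. Qed.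

Lemma coef_pv q d (X : 'M[C]_(q, d.+1)) i k :
  (pv X i ord0)`_k = if (k < d.+1)%N then X i (inord k) else 0.
Proof. by rewrite mxE coef_poly. Qed.

Lemma size_pv q d (X : 'M[C]_(q, d.+1)) i : (size (pv X i ord0) <= d.+1)%N.
Proof. by rewrite mxE size_poly. Qed.

Lemma pv_inj q d (X : 'M[C]_(q, d.+1)) : pv X = 0 -> X = 0.
Proof.
move=> H; apply/matrixP => i j; rewrite mxE.
have := congr1 (fun y : 'cV[{poly C}]_q => (y i ord0)`_j) H; rewrite /= coef_pv ltn_ord mxE coef0.
by rewrite inord_val.
Qed.

Lemma cm_inj p D (y : 'cV[{poly C}]_p) :
  (forall i, size (y i ord0) <= D)%N -> cm D y = 0 -> y = 0.
Proof.
move=> Hs H; apply/matrixP => i j; rewrite (ord1 j) mxE; apply/polyP => k.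
rewrite coef0; case: (ltnP k D) => hk.
  by have := congr1 (fun M : 'M[C]_(p, D) => M i (Ordinal hk)) H; rewrite !mxE.
by rewrite nth_default // (leq_trans (Hs i)).
Qed.

Lemma pv_cm p d (y : 'cV[{poly C}]_p) :
  (forall i, size (y i ord0) <= d.+1)%N -> pv (cm d.+1 y) = y.
Proof.
move=> Hs; apply/matrixP => i j; rewrite (ord1 j) mxE; apply/polyP => k.
rewrite coef_poly; case: ifP => hk; first by rewrite mxE inordK.
by rewrite nth_default // (leq_trans (Hs i)) // leqNgt hk.
Qed.

Lemma size_mulmx_le p q (P : 'M[{poly C}]_(p, q)) (x : 'cV[{poly C}]_q) s t i :
  (forall i j, size (P i j) <= s.+1)%N -> (forall j, size (x j ord0) <= t.+1)%N ->
  (size ((P *m x) i ord0) <= (s + t).+1)%N.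
Proof.
move=> HP Hx; rewrite mxE; apply: (big_ind (fun p : {poly C} => size p <= (s + t).+1)%N).
- by rewrite size_poly0.
- by move=> p1 p2 h1 h2; rewrite (leq_trans (size_add _ _)) // geq_max h1 h2.
move=> j _; rewrite (leq_trans (size_mul_leq _ _)) //.
have := leq_add (HP i j) (Hx j); move=> h; rewrite -subn1 leq_subLR; apply: (leq_trans h); lia.
Qed.

Lemma pv_mul q q' d (V : 'M[C]_(q, q')) (X : 'M[C]_(q', d.+1)) :
  pv (V *m X) = map_mx polyC V *m pv X.
Proof.
apply/matrixP => i j; rewrite (ord1 j) [RHS]mxE; apply/polyP => k.
rewrite coef_pv coef_sum; case: ifP => hk.
  rewrite mxE; apply: eq_bigr => l _; rewrite mxE coefCM coef_pv hk //.
by rewrite big1 // => l _; rewrite mxE coefCM coef_pv hk mulr0.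
Qed.

Lemma cm_mul p p' D (U : 'M[C]_(p', p)) (y : 'cV[{poly C}]_p) :
  cm D (map_mx polyC U *m y) = U *m cm D y.
Proof.
apply/matrixP => i j; rewrite !mxE coef_sum; apply: eq_bigr => k _.
by rewrite !mxE coefCM.
Qed.

Lemma Fd_mul p p' q q' d D (U : 'M[C]_(p', p)) (P : 'M[{poly C}]_(p, q))
   (V : 'M[C]_(q, q')) X :
  Fd d D (map_mx polyC U *m P *m map_mx polyC V) X = U *m Fd d D P (V *m X).
Proof. by rewrite /Fd pv_mul -!mulmxA cm_mul. Qed.

Lemma rk_mul p p' q q' d (U : 'M[C]_(p', p)) (P : 'M[{poly C}]_(p, q))
   (V : 'M[C]_(q, q')) :
  (rk d (map_mx polyC U *m P *m map_mx polyC V) <= rk d P)%N.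
Proof.
rewrite /rk; set f := linfun (Fd d d.+2 P).
have -> : limg (linfun (Fd d d.+2 (map_mx polyC U *m P *m map_mx polyC V)))
   = (linfun (mulmx U) @: (f @: (linfun (mulmx V) @: fullv)))%VS.
  rewrite -!limg_comp; congr (_ @: _)%VS; apply/lfunP => X.
  by rewrite !comp_lfunE !lfunE /= Fd_mul.
apply: leq_trans (dim_limg_le _ _) _; apply: dimvS; apply: limgS; exact: subvf.
Qed.

Lemma pv_col q1 q2 d (X1 : 'M[C]_(q1, d.+1)) (X2 : 'M[C]_(q2, d.+1)) :
  pv (col_mx X1 X2) = col_mx (pv X1) (pv X2).
Proof.
apply/matrixP => i j; case: (split_ordP i) => k ->;
  rewrite ?col_mxEu ?col_mxEd !mxE; apply/polyP => l; rewrite !coef_poly;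
  by rewrite ?col_mxEu ?col_mxEd.
Qed.

Lemma cm_col p1 p2 D (y1 : 'cV[{poly C}]_p1) (y2 : 'cV[{poly C}]_p2) :
  cm D (col_mx y1 y2) = col_mx (cm D y1) (cm D y2).
Proof.
apply/matrixP => i j; case: (split_ordP i) => k ->;
  by rewrite [LHS]mxE ?col_mxEu ?col_mxEd mxE.
Qed.

Lemma Fd_block p1 p2 q1 q2 d D (P1 : 'M[{poly C}]_(p1, q1)) (P2 : 'M[{poly C}]_(p2, q2)) X1 X2 :
  Fd d D (block_mx P1 0 0 P2) (col_mx X1 X2) = col_mx (Fd d D P1 X1) (Fd d D P2 X2).
Proof.
by rewrite /Fd pv_col mul_block_col !mul0mx addr0 add0r cm_col.
Qed.


Lemma rk_block p1 p2 q1 q2 d (P1 : 'M[{poly C}]_(p1, q1)) (P2 : 'M[{poly C}]_(p2, q2)) :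
  (rk d P1 + rk d P2 <= rk d (block_mx P1 0 0 P2))%N.
Proof.
rewrite /rk.
set F := linfun (Fd d d.+2 (block_mx P1 0 0 P2)).
set pi1 := linfun (mulmx (row_mx 1%:M 0 : 'M[C]_(p1, p1 + p2))) : 'Hom('M[C]_(p1 + p2, d.+2), 'M[C]_(p1, d.+2)).
set io2 := linfun (mulmx (col_mx 0 1%:M : 'M[C]_(p1 + p2, p2))) : 'Hom('M[C]_(p2, d.+2), 'M[C]_(p1 + p2, d.+2)).
rewrite -(limg_ker_dim pi1 (limg F)) addnC leq_add //; last first.
  apply: dimvS; apply/subvP => y /memv_imgP [x _ ->]; rewrite lfunE /=.
  have -> : Fd d d.+2 P1 x = pi1 (F (col_mx x 0)).
    by rewrite !lfunE /= Fd_block linear0 mul_row_col mul1mx mul0mx addr0.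
  by apply: memv_img; apply: memv_img; apply: memvf.
have io2K : (limg (linfun (Fd d d.+2 P2)) :&: lker io2 = 0)%VS.
  apply/eqP; rewrite -subv0; apply/subvP => y; rewrite memv_cap memv_ker memv0.
  case/andP => _; rewrite lfunE /= mul_col_mx mul0mx mul1mx => /eqP H.
  by apply/eqP; have := congr1 dsubmx H; rewrite col_mxKd linear0.
rewrite -(limg_dim_eq io2K); apply: dimvS; apply/subvP => y.
case/memv_imgP => z /memv_imgP [x _ ->] ->; rewrite memv_cap memv_ker.
apply/andP; split.
  have -> : io2 (linfun (Fd d d.+2 P2) x) = F (col_mx 0 x).
    by rewrite !lfunE /= Fd_block linear0 mul_col_mx mul0mx mul1mx.
  by apply: memv_img; apply: memvf.
by rewrite !lfunE /= mulmxA mul_row_col mul1mx mul0mx addr0 mul0mx.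
Qed.

Lemma vdegP p e (u : 'cV[{poly C}]_p) : vdeg_le e u -> forall i, (size (u i ord0) <= e.+1)%N.
Proof. by move/forallP. Qed.

Lemma outer_sum m n k (u : 'I_k -> 'cV[{poly C}]_m) (v : 'I_k -> 'cV[{poly C}]_n) :
  \sum_(i < k) u i *m (v i)^T =
  (\matrix_(r < m, i < k) u i r ord0) *m (\matrix_(i < k, c < n) v i c ord0).
Proof.
apply/matrixP => r c; rewrite summxE !mxE; apply: eq_bigr => i _.
by rewrite mxE big_ord1 !mxE.
Qed.

Lemma rk_Car m n a b d (u : 'I_(a + b) -> 'cV[{poly C}]_m) (v : 'I_(a + b) -> 'cV[{poly C}]_n) :
  (forall i, vdeg_le 1 (u i) /\ vdeg_le 1 (v i)) ->
  (forall i : 'I_(a + b), (i < a)%N -> vdeg_le 0 (u i)) ->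
  (forall i : 'I_(a + b), (a <= i)%N -> vdeg_le 0 (v i)) ->
  (rk d (\sum_(i < a + b) u i *m (v i)^T) <= (a + b) * d.+1 + a)%N.
Proof.
move=> H1 Hu Hv; rewrite big_split_ord /= !outer_sum.
set U1 := \matrix_(r < m, i < a) _; set V1 := \matrix_(i < a, c < n) _.
set U2 := \matrix_(r < m, i < b) _; set V2 := \matrix_(i < b, c < n) _.
have sV1 : forall i j, (size (V1 i j) <= 1.+1)%N.
  by move=> i j; rewrite mxE; apply: vdegP; case: (H1 (lshift b i)).
have sV2 : forall i j, (size (V2 i j) <= 0.+1)%N.
  move=> i j; rewrite mxE; apply: vdegP; apply: Hv; rewrite /= leq_addr //.
set G1 := linfun (Fd d d.+2 V1); set H1' := linfun (Fd d.+1 d.+2 U1).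
set G2 := linfun (Fd d d.+1 V2); set H2' := linfun (Fd d d.+2 U2).
have EF : forall X, Fd d d.+2 (U1 *m V1 + U2 *m V2) X = H1' (G1 X) + H2' (G2 X).
  move=> X; rewrite !lfunE /= /Fd mulmxDl cmD -!mulmxA.
  rewrite (pv_cm (y := V1 *m pv X)) ?(pv_cm (y := V2 *m pv X)) //.
    by move=> i; exact: (size_mulmx_le i sV2 (size_pv X)).
  by move=> i; exact: (size_mulmx_le i sV1 (size_pv X)).
rewrite /rk.
apply: (@leq_trans (\dim (H1' @: limg G1 + H2' @: limg G2)%VS)).
  apply: dimvS; apply/subvP => y /memv_imgP [x _ ->]; rewrite lfunE /= EF.
  by apply: memv_add; apply: memv_img; apply: memv_img; apply: memvf.
apply: leq_trans (dimv_add_leqif _ _).1 _.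
have h1 := dim_limg_tgt G1; have h2 := dim_limg_tgt G2.
have h3 := dim_limg_le H1' (limg G1); have h4 := dim_limg_le H2' (limg G2).
rewrite !dim_mat in h1 h2.
have -> : ((a + b) * d.+1 + a = a * d.+2 + b * d.+1)%N by rewrite !mulnS; lia.
by apply: leq_add; [apply: leq_trans h3 h1 | apply: leq_trans h4 h2].
Qed.

Lemma size_pencil p q (A B : 'M[C]_(p, q)) i j : (size (pencil_mx A B i j) <= 1.+1)%N.
Proof.
rewrite !mxE; apply: leq_trans (size_add _ _) _; rewrite geq_max.
rewrite (leq_trans (size_polyC_leq1 _)) //=.
apply: leq_trans (size_mul_leq _ _) _; rewrite size_polyX.
by have := size_polyC_leq1 (B i j); case: size => [|[]].
Qed.

Lemma inj_core p q (P : 'M[{poly C}]_(p, q)) (M : 'M_q) (W : 'M[{poly C}]_(q, p))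
   (x : 'cV[{poly C}]_q) :
  W *m P = M -> \det M != 0 -> P *m x = 0 -> x = 0.
Proof.
move=> HW Hd Hx.
have : (\adj M *m (W *m P)) *m x = 0 by rewrite -!mulmxA Hx !mulmx0.
rewrite HW mul_adj_mx mul_scalar_mx => /eqP; rewrite scalemx_eq0 (negbTE Hd) /=.
by move/eqP.
Qed.

Lemma det_pencil_neq0 p q (A B : 'M[C]_(p, q)) (W : 'M[C]_(q, p)) :
  W *m A = 1%:M \/ W *m B = 1%:M ->
  \det (map_mx polyC W *m pencil_mx A B) != 0.
Proof.
rewrite /pencil_mx mulmxDr -scalemxAr -!map_mxM.
case=> ->.
  apply/eqP => H.
  have := congr1 (horner_eval 0) H; rewrite -det_map_mx rmorph0.
  rewrite map_mxD map_mxZ.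
  have -> : map_mx (horner_eval 0) (map_mx polyC (1%:M : 'M[C]_q)) = 1%:M.
    by apply/matrixP => i j; rewrite !mxE /horner_eval hornerC.
  rewrite /= horner_evalE hornerX scale0r addr0 det1 => /eqP; by rewrite oner_eq0.
have -> : map_mx polyC (W *m A) + 'X *: map_mx (@polyC C) 1%:M
          = char_poly_mx (- (W *m A)).
  rewrite /char_poly_mx map_mxN opprK addrC; congr (_ + _).
  by rewrite map_mx1 scalemx1.
exact/monic_neq0/char_poly_monic.
Qed.

Lemma rk_inj p q d (A B : 'M[C]_(p, q)) (W : 'M[C]_(q, p)) :
  W *m A = 1%:M \/ W *m B = 1%:M ->
  (q * d.+1 <= rk d (pencil_mx A B))%N.
Proof.
move=> HW; rewrite /rk; set F := linfun _.
have := limg_ker_dim F fullv; rewrite capfv dimvf dim_mat => <-.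
suff -> : lker F = 0%VS by rewrite dimv0.
apply/eqP; rewrite -subv0; apply/subvP => X; rewrite memv_ker memv0 lfunE /=.
move/eqP => H; apply/eqP; apply: pv_inj.
have H' := cm_inj _ H.
have {H' H}H : pencil_mx A B *m pv X = 0.
  apply: H' => i; exact: (size_mulmx_le i (size_pencil A B) (size_pv X)).
exact: (inj_core (W := map_mx polyC W) (erefl _) (det_pencil_neq0 HW) H).
Qed.

Lemma sum_delta (R : nzSemiRingType) n (f : 'I_n -> R) (j0 : 'I_n) c :
  nat_of_ord j0 = c -> \sum_(j < n) (((j : nat) == c)%:R * f j) = f j0.
Proof.
move=> <-; rewrite (bigD1 j0) //= eqxx mul1r big1 ?addr0 // => j hj.
by move: hj; rewrite -(inj_eq val_inj) /= => /negbTE ->; rewrite mul0r.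
Qed.

Lemma L_row k (x : 'cV[{poly C}]_k.+1) (i : 'I_k) :
  (pencil_mx (pA (Lpencil C k)) (pB (Lpencil C k)) *m x) i ord0
  = x (lift ord0 i) ord0 + 'X * x (widen_ord (leqnSn k) i) ord0.
Proof.
rewrite mxE (eq_bigr (fun j : 'I_k.+1 => ((j : nat) == i.+1)%:R * x j ord0
   + 'X * (((j : nat) == i)%:R * x j ord0))); last first.
  by move=> j _; rewrite !mxE !polyC_natr mulrDl mulrA.
by rewrite big_split /= -mulr_sumr (sum_delta _ (j0 := lift ord0 i)) //
  (sum_delta _ (j0 := widen_ord (leqnSn k) i)).
Qed.

Lemma rk_L k d : (k <= d.+1)%N ->
  (k * d.+2 <= rk d (pencil_mx (pA (Lpencil C k)) (pB (Lpencil C k))))%N.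
Proof.
move=> hk; rewrite /rk; set P := pencil_mx _ _; set F := linfun _.
pose E0 : 'M[{poly C}]_(1, k.+1) := \matrix_(i < 1, j < k.+1) ((j : nat) == 0%N)%:R.
pose T := linfun (Fd d (d.+1 - k) E0).
have key : (lker F :&: lker T = 0)%VS.
  apply/eqP; rewrite -subv0; apply/subvP => X.
  rewrite memv_cap !memv_ker memv0 !lfunE /= => /andP[/eqP HF /eqP HT].
  set x := pv X.
  have HP : P *m x = 0.
    apply: (cm_inj _ HF) => i; exact: (size_mulmx_le i (size_pencil _ _) (size_pv X)).
  have rec : forall i : 'I_k, x (lift ord0 i) ord0 = - 'X * x (widen_ord (leqnSn k) i) ord0.
    move=> i; have := congr1 (fun y : 'cV[{poly C}]_k => y i ord0) HP.
    rewrite L_row => h; apply/eqP; rewrite mulNr -addr_eq0 h mxE //.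
  have pow : forall j : 'I_k.+1, x j ord0 = (- 'X) ^+ j * x ord0 ord0.
    case=> i; elim: i => [|i IH] hi.
      by rewrite expr0 mul1r; congr (x _ _); apply: val_inj.
    have hi' : (i < k)%N := hi.
    have -> : Ordinal hi = lift ord0 (Ordinal hi') by apply: val_inj.
    rewrite rec exprS -mulrA; congr (_ * _).
    have -> : widen_ord (leqnSn k) (Ordinal hi') = Ordinal (ltnW hi) by apply: val_inj.
    exact: IH.
  have szX : size ((- 'X) ^+ k : {poly C}) = k.+1.
    have := size_exp (- 'X : {poly C}) k; rewrite size_opp size_polyX /= mul1n => h.
    have nz : (0 < size ((- 'X) ^+ k : {poly C}))%N.
      by rewrite size_poly_gt0 expf_neq0 // oppr_eq0 polyX_eq0.
    by rewrite -(prednK nz) h.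
  have sx0 : (size (x ord0 ord0) <= d.+1 - k)%N.
    have := size_pv X ord_max; rewrite -/x (pow ord_max) /=.
    case: (eqVneq (x ord0 ord0) 0) => [-> | nz]; first by rewrite size_poly0.
    rewrite size_mul ?expf_neq0 ?oppr_eq0 ?polyX_eq0 // szX addSn /= => hh; by rewrite leq_subRL.
  have E0x : (E0 *m x) ord0 ord0 = x ord0 ord0.
    rewrite mxE (eq_bigr (fun j : 'I_k.+1 => ((j : nat) == 0%N)%:R * x j ord0)).
      by rewrite (sum_delta _ (j0 := ord0)).
    by move=> j _; rewrite mxE.
  have x0 : x ord0 ord0 = 0.
    have : E0 *m x = 0 by apply: (cm_inj _ HT) => i; rewrite (ord1 i) E0x.
    by move=> h; rewrite -E0x h mxE.
  apply/eqP; apply: pv_inj; apply/matrixP => j c; rewrite (ord1 c) -/x pow x0 mulr0.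
  by rewrite mxE.
have h1 := limg_ker_dim F fullv; rewrite capfv dimvf dim_mat in h1.
have h2 : (\dim (lker F) <= d.+1 - k)%N.
  rewrite -(limg_dim_eq key); apply: leq_trans (dimvS (limgS T (subvf (lker F)))) _.
  by apply: leq_trans (dim_limg_tgt T) _; rewrite dim_mat mul1n.
rewrite !mulSn !mulnS in h1 *; lia.
Qed.

Definition Ppoly (P : pencil C) := pencil_mx (pA P) (pB P).
Definition ptr (P : pencil C) : pencil C := @Pencil C (pcol P) (prow P) (pA P)^T (pB P)^T.
Definition Pfold (ps : seq (pencil C)) := foldr (@pdsum C) (pempty C) ps.
Definition kb (b : kblock C) : nat := match b with KL k | KLT k | KJ k _ | KN k => k end.

Lemma Ppoly_dsum P1 P2 : Ppoly (pdsum P1 P2) = block_mx (Ppoly P1) 0 0 (Ppoly P2).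
Proof.
rewrite /Ppoly /pencil_mx /= !map_block_mx !map_mx0 scale_block_mx !scaler0.
by rewrite add_block_mx !addr0.
Qed.

Lemma rk_fold d ps :
  (\sum_(P <- ps) rk d (Ppoly P) <= rk d (Ppoly (Pfold ps)))%N.
Proof.
elim: ps => [|P ps IH]; first by rewrite big_nil.
rewrite big_cons /= Ppoly_dsum; apply: leq_trans (rk_block _ _ _).
by rewrite leq_add2l.
Qed.

Lemma nrank_fold ps :
  (normal_rank (Ppoly (Pfold ps)) <= \sum_(P <- ps) normal_rank (Ppoly P))%N.
Proof.
elim: ps => [|P ps IH]; first by rewrite big_nil /normal_rank rank_leq_row.
rewrite big_cons /= Ppoly_dsum /normal_rank map_block_mx !map_mx0 rank_diag_block_mx.
by rewrite leq_add2l.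
Qed.

Lemma nrank_mul p p' q q' (U : 'M[C]_(p', p)) (P : 'M[{poly C}]_(p, q)) (V : 'M[C]_(q, q')) :
  (normal_rank (map_mx polyC U *m P *m map_mx polyC V) <= normal_rank P)%N.
Proof.
rewrite /normal_rank !map_mxM; apply: leq_trans (mxrankM_maxl _ _) _.
exact: mxrankM_maxr.
Qed.

Lemma pencil_conj p p' q q' (U : 'M[C]_(p', p)) (A B : 'M[C]_(p, q)) (V : 'M[C]_(q, q')) :
  pencil_mx (U *m A *m V) (U *m B *m V)
  = map_mx polyC U *m pencil_mx A B *m map_mx polyC V.
Proof.
by rewrite /pencil_mx !map_mxM mulmxDr mulmxDl -scalemxAr -scalemxAl.
Qed.

Lemma generic m n a r d (A B : 'M[C]_(m, n)) (P : pencil C) :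
  (a <= r)%N -> in_Car a r (pencil_mx A B) -> normal_rank (pencil_mx A B) = r ->
  strict_equiv A B P ->
  (rk d (Ppoly P) <= r * d.+1 + a)%N /\ (r <= normal_rank (Ppoly P))%N.
Proof.
move=> har HC Hr [U [U' [V [V' [UU' U'U VV' V'V [EA EB]]]]]].
have EQ : pencil_mx A B = map_mx polyC U *m Ppoly P *m map_mx polyC V.
  by rewrite EA EB pencil_conj.
have EP : Ppoly P = map_mx polyC U' *m pencil_mx A B *m map_mx polyC V'.
  rewrite -pencil_conj EA EB /Ppoly; congr pencil_mx;
  by rewrite !mulmxA U'U mul1mx -!mulmxA VV' mulmx1.
split; last by rewrite -{1}Hr EQ nrank_mul.
rewrite EP; apply: leq_trans (rk_mul _ _ _ _) _.
case: HC => u [v [Hdeg Hu Hv ->]].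
clear Hr; have Er : r = (a + (r - a))%N by rewrite subnKC.
move: (r - a)%N Er u v Hdeg Hu Hv => b Er; subst r => u v Hdeg Hu Hv.
exact: rk_Car.
Qed.

Lemma account (g : kblock C -> pencil C) (h : kblock C -> nat) m n a r
    (A B : 'M[C]_(m, n)) bs :
  (a <= r)%N -> in_Car a r (pencil_mx A B) -> normal_rank (pencil_mx A B) = r ->
  strict_equiv A B (Pfold (map g bs)) ->
  (forall b d, (h b <= d.+1)%N -> (kb b * d.+1 + h b <= rk d (Ppoly (g b)))%N) ->
  (forall b, (normal_rank (Ppoly (g b)) <= kb b)%N) ->
  (\sum_(b <- bs) h b <= a)%N.
Proof.
move=> har HC Hr HE Hrk Hnr.
set d := \sum_(b <- bs) h b.
have [h1 h2] := generic d har HC Hr HE.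
have h3 := rk_fold d (map g bs); rewrite big_map in h3.
have h4 := nrank_fold (map g bs); rewrite big_map in h4.
have h5 : (\sum_(b <- bs) normal_rank (Ppoly (g b)) <= \sum_(b <- bs) kb b)%N.
  by apply: leq_sum => b _; apply: Hnr.
have h6 : forall bs', (\sum_(b <- bs') h b <= d.+1)%N ->
  ((\sum_(b <- bs') kb b) * d.+1 + \sum_(b <- bs') h b
     <= \sum_(b <- bs') rk d (Ppoly (g b)))%N.
  elim=> [|b bs' IH]; first by rewrite !big_nil.
  rewrite !big_cons => hb.
  have hb1 : (h b <= d.+1)%N by apply: leq_trans hb; apply: leq_addr.
  have hb2 : (\sum_(b <- bs') h b <= d.+1)%N by apply: leq_trans hb; apply: leq_addl.
  have := Hrk b d hb1; have := IH hb2; rewrite mulnDl; lia.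
have h7 := h6 bs (leqnSn d).
set K := \sum_(b <- bs) kb b in h5 h7.
have h8 : (r * d.+1 <= K * d.+1)%N.
  by rewrite leq_mul2r /=; apply: leq_trans h2 (leq_trans h4 h5).
move: h1 h3 h7 h8; rewrite -/d; move: (r * d.+1)%N (K * d.+1)%N => x y; lia.
Qed.

Lemma LLt k : pB (Lpencil C k) *m (pB (Lpencil C k))^T = 1%:M.
Proof.
apply/matrixP => i i'; rewrite !mxE.
rewrite (eq_bigr (fun j : 'I_k.+1 => ((j : nat) == i)%:R * ((j : nat) == i')%:R)).
  by rewrite (sum_delta _ (j0 := widen_ord (leqnSn k) i)) //= eq_sym.
by move=> j _; rewrite /= !mxE.
Qed.

Lemma block_rk b d : (((if b is KL k then k else 0%N) <= d.+1)%N) ->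
  (kb b * d.+1 + (if b is KL k then k else 0%N) <= rk d (Ppoly (block_pencil b)))%N.
Proof.
case: b => [k|k|k mu|k] /= hk.
- by rewrite -mulnSr; apply: rk_L.
- rewrite addn0; apply: (@rk_inj _ _ _ _ _ (pB (Lpencil C k))); right; exact: LLt.
- rewrite addn0; apply: (@rk_inj _ _ _ _ _ 1%:M); right; exact: mul1mx.
- rewrite addn0; apply: (@rk_inj _ _ _ _ _ 1%:M); left; exact: mul1mx.
Qed.

Lemma block_nrank b : (normal_rank (Ppoly (block_pencil b)) <= kb b)%N.
Proof. by case: b => [k|k|k mu|k] /=; rewrite /normal_rank ?rank_leq_row ?rank_leq_col. Qed.

Lemma blockT_rk b d : (((if b is KLT k then k else 0%N) <= d.+1)%N) ->
  (kb b * d.+1 + (if b is KLT k then k else 0%N) <= rk d (Ppoly (ptr (block_pencil b))))%N.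
Proof.
case: b => [k|k|k mu|k] /= hk.
- rewrite addn0; apply: (@rk_inj _ _ _ _ _ (pB (Lpencil C k))); right; exact: LLt.
- by rewrite /Ppoly /= !trmxK -mulnSr; apply: rk_L.
- rewrite addn0; apply: (@rk_inj _ _ _ _ _ 1%:M); right; by rewrite /= trmx1 mul1mx.
- rewrite addn0; apply: (@rk_inj _ _ _ _ _ 1%:M); left; by rewrite /= trmx1 mul1mx.
Qed.

Lemma blockT_nrank b : (normal_rank (Ppoly (ptr (block_pencil b))) <= kb b)%N.
Proof. by case: b => [k|k|k mu|k] /=; rewrite /normal_rank ?rank_leq_row ?rank_leq_col. Qed.

Lemma ptr_dsum P1 P2 : ptr (pdsum P1 P2) = pdsum (ptr P1) (ptr P2).
Proof. by rewrite /ptr /pdsum /= !tr_block_mx !trmx0. Qed.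

Lemma ptr_fold ps : ptr (Pfold ps) = Pfold (map ptr ps).
Proof.
elim: ps => [|P ps IH] /=; first by rewrite /ptr /pempty /= !trmx0.
by rewrite ptr_dsum IH.
Qed.

Lemma strict_equiv_tr m n (A B : 'M[C]_(m, n)) P :
  strict_equiv A B P -> strict_equiv A^T B^T (ptr P).
Proof.
move=> [U [U' [V [V' [UU' U'U VV' V'V [EA EB]]]]]].
exists V^T, V'^T, U^T, U'^T; split.
- by rewrite -trmx_mul V'V trmx1.
- by rewrite -trmx_mul VV' trmx1.
- by rewrite -trmx_mul U'U trmx1.
- by rewrite -trmx_mul UU' trmx1.
by rewrite EA EB /= !trmx_mul !mulmxA.
Qed.

Lemma pencil_tr m n (A B : 'M[C]_(m, n)) : pencil_mx A^T B^T = (pencil_mx A B)^T.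
Proof. by rewrite /pencil_mx linearD linearZ /= !map_trmx. Qed.

Lemma nrank_tr m n (Q : 'M[{poly C}]_(m, n)) : normal_rank Q^T = normal_rank Q.
Proof. by rewrite /normal_rank -map_trmx mxrank_tr. Qed.

Lemma in_Car_tr m n a r (Q : 'M[{poly C}]_(m, n)) :
  (a <= r)%N -> in_Car a r Q -> in_Car (r - a) r Q^T.
Proof.
move=> har [u [v [Hdeg Hu Hv ->]]].
exists (fun i => v (rev_ord i)), (fun i => u (rev_ord i)); split.
- by move=> i; case: (Hdeg (rev_ord i)).
- move=> i hi; apply: Hv => /=; move: (ltn_ord i) hi; lia.
- move=> i hi; apply: Hu => /=; move: (ltn_ord i) hi; lia.
rewrite linear_sum /= (reindex_inj rev_ord_inj) /=; apply: eq_bigr => i _.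
by rewrite trmx_mul trmxK.
Qed.

End Aux.

Theorem lemma3p3 (R : realType) (m n r a : nat) (A B : 'M[R[i]]_(m, n)) :
  (0 < m)%N -> (0 < n)%N -> (r <= minn m n)%N -> (a <= r)%N ->
  in_Car a r (pencil_mx A B) ->
  normal_rank (pencil_mx A B) = r ->
  forall bs : seq (kblock R[i]), is_KCF A B bs ->
    (eps_sum bs <= a)%N /\ (eta_sum bs <= r - a)%N.
Proof.
move=> _ _ _ har HC Hr bs [_ HE]; split.
  have HE' : strict_equiv A B (Pfold (map (@block_pencil _) bs)).
    by rewrite /Pfold foldr_map.
  exact: (account (h := fun b => if b is KL k then k else 0%N) har HC Hr HE'
            (@block_rk _) (@block_nrank _)).
have HE' : strict_equiv A^T B^T (Pfold (map (fun b => ptr (block_pencil b)) bs)).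
  have -> : map (fun b => ptr (block_pencil b)) bs
            = map (@ptr _) (map (@block_pencil _) bs) by rewrite -map_comp.
  rewrite -ptr_fold.
  by apply: strict_equiv_tr; rewrite /Pfold foldr_map.
have har' : (r - a <= r)%N by apply: leq_subr.
have HC' := in_Car_tr har HC; rewrite -pencil_tr in HC'.
have Hr' : normal_rank (pencil_mx A^T B^T) = r by rewrite pencil_tr nrank_tr.
exact: (account (h := fun b => if b is KLT k then k else 0%N) har' HC' Hr' HE'
          (@blockT_rk _) (@blockT_nrank _)).
Qed.
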